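(* Under Assumptions 1 and 2 (stated in the context), there exists a constant $L_1$ such that for all $i,j,k$, all $t_1,t_2$ and all $\theta$ in the (bounded) domain, $$|\text{dist}(b_{ij}(t_1,\theta),o_k)-\text{dist}(b_{ij}(t_2,\theta),o_k)|\le L_1|t_1-t_2|.$$
   Context: An articulated robot consists of finitely many rigid bodies. For a finite-dimensional trajectory parameter vector $\theta$ and $t\in[0,T]$, the $i$-th body occupies $b_i(t,\theta)\subset\mathbb{R}^3$; obstacles occupy $o\subset\mathbb{R}^3$. $\text{dist}(A,B)$ is the shortest Euclidean distance between sets. The constraints of interest are $\text{dist}(b_i(t,\theta),o)\ge d_0$ for all $i$ and $t\in[0,T]$. Assumption 1: there are finite decompositions $b_i(t,\theta)=\bigcup_j b_{ij}(t,\theta)$, $o=\bigcup_k o_k$ such that for every triple $(i,j,k)$ the function $(t,\theta)\mapsto\text{dist}(b_{ij}(t,\theta),o_k)$ is sufficiently smooth. Assumption 2: the feasible domain of $t$ and $\theta$ is bounded. *)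

(* Defs.v *)
From HB Require Import structures.
From mathcomp Require Import all_boot all_order all_algebra.
From mathcomp Require Import all_classical all_reals all_analysis.
Set Implicit Arguments. Unset Strict Implicit. Unset Printing Implicit Defensive.
Import Order.TTheory GRing.Theory Num.Theory.
Import numFieldNormedType.Exports.
Local Open Scope classical_set_scope.
Local Open Scope ring_scope.

Notation R3 R := 'rV[R]_3.

(* Euclidean distance between two points of R^3 (the library norm on 'rV is
   the max norm, so we write the Euclidean one explicitly). *)
Definition eucl {R : realType} (x y : R3 R) : R :=
  Num.sqrt (\sum_(l < 3) (x ord0 l - y ord0 l) ^+ 2).

Definition dist {R : realType} (A B : set (R3 R)) : R :=
  inf [set d | exists x y, A x /\ B y /\ d = eucl x y].

(* "Sufficiently smooth" on an open set U: differentiable at every point of U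
   with derivative depending continuously on the point (C^1), the continuity
   of the derivative being expressed direction-wise. *)
Definition C1_on {R : realType} {V : normedModType R}
    (U : set V) (f : V -> R^o) : Prop :=
  open U /\
  (forall x, U x -> differentiable f x) /\
  (forall v : V, {within U, continuous (fun x => 'd f x v)}).

(* Main.v *)
Require Import Defs.
From HB Require Import structures.
From mathcomp Require Import all_boot all_order all_algebra.
From mathcomp Require Import all_classical all_reals all_analysis.
Import Order.TTheory GRing.Theory Num.Theory.
Import numFieldNormedType.Exports.
Local Open Scope classical_set_scope.
Local Open Scope ring_scope.

Lemma dir_derive (R : realType) n (f : (R^o * 'rV[R]_n)%type -> R^o) x th :
  differentiable f (x, th) ->
  is_derive (x : R^o) 1 (fun t : R^o => f (t, th)) ('d f (x, th) (1, 0)).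
Proof.
move=> df.
have E : (fun h : R => h^-1 *: (((fun t : R^o => f (t, th)) \o shift x) (h *: (1:R^o)) - f (x,th)))
  = (fun h : R => h^-1 *: ((f \o shift (x, th)) (h *: ((1:R^o), (0:'rV[R]_n))) - f (x,th))).
  apply/funext => h /=.
  have -> : (h *: ((1:R^o), (0:'rV[R]_n)) + (x, th)) = (h *: (1:R^o) + x, th).
    by congr (_, _); rewrite /= ?scaler0 ?add0r.
  by [].
apply: DeriveDef.
  by rewrite /derivable E; apply: diff_derivable.
by rewrite /derive E -/(derive f (x,th) (1,0)) deriveE.
Qed.

Lemma closure_bounded (R : realType) n (Theta : set 'rV[R]_n) :
  bounded_set Theta -> bounded_set (closure Theta).
Proof.
move=> [M [Mreal HM]].
have HM1 : forall x, Theta x -> `|x| <= M + 1 by apply: HM; rewrite ltrDl.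
have cl : closed [set x : 'rV[R]_n | `|x| <= M + 1].
  rewrite -/((@Num.norm _ _) @^-1` [set x : R | x <= M + 1]).
  apply: (preimage_closed _ (@closed_le _ _)) => y _.
  exact: norm_continuous.
have sub : closure Theta `<=` [set x : 'rV[R]_n | `|x| <= M + 1].
  by move=> x /(closureS HM1); rewrite -((closure_id _).1 cl).
exists (M + 1); split; first by rewrite realD.
move=> N HN x /sub /= H; apply: (le_trans H); exact: ltW.
Qed.

Lemma one_lip (R : realType) n (T : R) (Theta : set 'rV[R]_n)
  (f : (R^o * 'rV[R]_n)%type -> R^o) (U : set (R^o * 'rV[R]_n)%type) :
  `[0, T] `*` closure Theta `<=` U -> C1_on U f -> bounded_set Theta ->
  exists L : R, forall t1 t2 th, t1 \in `[0, T] -> t2 \in `[0, T] -> th \in Theta ->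
    `|f (t1, th) - f (t2, th)| <= L * `|t1 - t2|.
Proof.
move=> SU [oU [dU cU]] bT.
have clc : compact (closure Theta).
  by apply: bounded_closed_compact; [exact: closure_bounded|exact: closed_closure].
have Sc : compact (`[0, T] `*` closure Theta) by apply: compact_setX => //; exact: segment_compact.
pose phi := fun p : (R^o * 'rV[R]_n)%type => 'd f p ((1:R^o), (0:'rV[R]_n)).
have phic : {within `[0, T] `*` closure Theta, continuous phi}.
  exact: (continuous_subspaceW SU (cU _)).
have := compact_bounded (continuous_compact phic Sc).
move=> [M [Mreal HM]].
have HM1 : forall y, (phi @` (`[0, T] `*` closure Theta)) y -> `|y| <= M + 1.
  by apply: HM; rewrite ltrDl.
exists (M + 1).
have key : forall t1 t2 th, t2 <= t1 -> t1 \in `[0, T] -> t2 \in `[0, T] -> th \in Theta ->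
    `|f (t1, th) - f (t2, th)| <= (M + 1) * `|t1 - t2|.
  move=> t1 t2 th le21 t1I t2I /[!inE] thT.
  have thc : closure Theta th by apply: subset_closure.
  have inS : forall x, x \in `[t2, t1] -> x \in `[0, T].
    move=> x; rewrite !in_itv /= => /andP[a b].
    move: t1I t2I; rewrite !in_itv /= => /andP[c d] /andP[e g].
    by rewrite (le_trans e a) (le_trans b d).
  have dx : forall x, x \in `[t2, t1] -> is_derive (x : R^o) 1 (fun t : R^o => f (t, th)) (phi (x, th)).
    move=> x xI; have := inS x xI; rewrite inE => xI'.
    by apply: dir_derive; apply: dU; apply: SU; split.
  have [c cI ->] := MVT_segment le21 (fun x xI => dx x (subset_itv_oo_cc xI))
    (derivable_within_continuous (fun x xI => @ex_derive _ _ _ _ _ _ _ (dx x xI))).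
  rewrite normrM (ger0_norm (x := t1 - t2)) ?subr_ge0 //.
  apply: ler_wpM2r; first by rewrite subr_ge0.
  apply: HM1; exists (c, th) => //; split => //=.
  by have := inS c cI; rewrite inE.
move=> t1 t2 th t1I t2I thT.
have [le21|lt12] := leP t2 t1; first exact: key.
by rewrite distrC (distrC t1); apply: key => //; exact: ltW.
Qed.

Lemma le_sum1 (R : realType) (T : finType) (F : T -> R) x :
  (forall y, 0 <= F y) -> F x <= \sum_y F y.
Proof. by move=> F0; rewrite (bigD1 x) //= lerDl sumr_ge0. Qed.

Theorem lemma1 (R : realType) (n : nat) (T : R)
  (* robot bodies, indexed by the finite type I *)
  (I : finType) (b : I -> R -> 'rV[R]_n -> set (R3 R))
  (* decomposition of body i into finitely many pieces indexed by J i *)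
  (J : I -> finType) (bij : forall i : I, J i -> R -> 'rV[R]_n -> set (R3 R))
  (* obstacles and their finite decomposition indexed by K *)
  (o : set (R3 R)) (K : finType) (ok : K -> set (R3 R))
  (* feasible domain of theta *)
  (Theta : set 'rV[R]_n)
  (* Assumption 1: decompositions *)
  (Hb : forall i t th, b i t th = \bigcup_(j in [set: J i]) bij i j t th)
  (Ho : o = \bigcup_(k in [set: K]) ok k)
  (* Assumption 1: smoothness of (t, theta) |-> dist(b_ij(t,theta), o_k) on an
     open neighbourhood of the closed feasible domain *)
  (Hsmooth : forall i (j : J i) (k : K), exists U : set (R^o * 'rV[R]_n)%type,
      `[0, T] `*` closure Theta `<=` U /\
      C1_on U (fun p : (R^o * 'rV[R]_n)%type => dist (bij i j p.1 p.2) (ok k)))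
  (* Assumption 2: the feasible domain is bounded *)
  (HTheta : bounded_set Theta) :
  exists L1 : R, forall (i : I) (j : J i) (k : K) (t1 t2 : R) (th : 'rV[R]_n),
    t1 \in `[0, T] -> t2 \in `[0, T] -> th \in Theta ->
    `|dist (bij i j t1 th) (ok k) - dist (bij i j t2 th) (ok k)| <= L1 * `|t1 - t2|.
Proof.
have H : forall i (j : J i) (k : K), exists L : R, forall t1 t2 th,
    t1 \in `[0, T] -> t2 \in `[0, T] -> th \in Theta ->
    `|dist (bij i j t1 th) (ok k) - dist (bij i j t2 th) (ok k)| <= L * `|t1 - t2|.
  move=> i j k; have [U [SU C]] := Hsmooth i j k.
  exact: (@one_lip R n T Theta (fun p : (R^o * 'rV[R]_n)%type => dist (bij i j p.1 p.2) (ok k)) U SU C HTheta).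
pose Lf i j k := proj1_sig (cid (H i j k)).
exists (\sum_i \sum_(j : J i) \sum_k `|Lf i j k|).
move=> i j k t1 t2 th t1I t2I thT.
apply: (le_trans (proj2_sig (cid (H i j k)) t1 t2 th t1I t2I thT)).
apply: ler_wpM2r => //.
apply: (le_trans (ler_norm _)).
apply: (le_trans (@le_sum1 R _ (fun k => `|Lf i j k|) k _)) => //.
apply: (le_trans (@le_sum1 R _ (fun j => \sum_k `|Lf i j k|) j _)); first by move=> y; exact: sumr_ge0.
apply: (le_trans (@le_sum1 R _ (fun i => \sum_(j : J i) \sum_k `|Lf i j k|) i _)) => //.
by move=> y; apply: sumr_ge0 => z _; exact: sumr_ge0.
Qed.
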